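(* Let $\nu$ be a vector norm on $\mathbb{R}^n$, let $H=\{x\in\mathbb{R}^n: e^Tx=0\}$ where $e=(1,\ldots,1)^T$, and let $P_1,P_2,\ldots$ be a sequence of $n\times n$ column stochastic matrices. If $\nu^0_H(P_i)\le 1$ for all $i$ and the sequence $\nu^0_H(P_1),\nu^0_H(P_2),\ldots$ has an accumulation point $c$ with $c<1$, then all general products of the sequence are weakly ergodic.
   Context: A column stochastic matrix is a nonnegative matrix each of whose columns sums to $1$; $H$ is invariant under every such matrix. The coefficient of ergodicity is $\nu^0_H(P)=\sup_{0\ne x\in H}\nu(Px)/\nu(x)$. General products: given a permutation $\sigma$ of the positive integers, set $B_i=P_{\sigma(i)}$; for an integer $p\ge0$ and each $r\ge1$, $C_{p,r}$ is a product of $B_{p+1},\ldots,B_{p+r}$, each used exactly once, in some order (chosen arbitrarily and independently for each $r$). All general products are weakly ergodic if for every such choice of $\sigma$, $p$ and orders, $\lim_{r\to\infty}C_{p,r}x=0$ for all $x\in H$. *)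

(* Defs.v *)
From HB Require Import structures.
From mathcomp Require Import all_boot all_order all_fingroup all_algebra.
From mathcomp Require Import all_classical all_reals all_analysis.
Set Implicit Arguments. Unset Strict Implicit. Unset Printing Implicit Defensive.
Import Order.TTheory GRing.Theory Num.Theory.
Import numFieldNormedType.Exports.
Local Open Scope classical_set_scope.
Local Open Scope ring_scope.

Definition is_vnorm (R : realType) (n : nat) (nu : 'cV[R]_n -> R) : Prop :=
  [/\ forall x, 0 <= nu x,
      forall x, nu x = 0 -> x = 0,
      forall (a : R) x, nu (a *: x) = `|a| * nu x &
      forall x y, nu (x + y) <= nu x + nu y].

Definition inH (R : realType) (n : nat) (x : 'cV[R]_n) : Prop :=
  \sum_(i < n) x i ord0 = 0.

Definition col_stochastic (R : realType) (n : nat) (P : 'M[R]_n) : Prop :=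
  (forall i j, 0 <= P i j) /\ (forall j, \sum_(i < n) P i j = 1).

Definition coeff_erg (R : realType) (n : nat) (nu : 'cV[R]_n -> R)
  (P : 'M[R]_n) : R :=
  sup [set nu (P *m x) / nu x | x in [set x | inH x /\ x <> 0]].

Definition accumulation_point (R : realType) (a : nat -> R) (c : R) : Prop :=
  forall (eps : R), 0 < eps -> forall N : nat, exists2 i : nat, (N <= i)%N & `|a i - c| < eps.

(* General product C_{p,r}: product of B_{p+1},...,B_{p+r} (B_i = P_{sigma i}),
   each used once, in the order given by the permutation ord r of 'I_r:
   C_{p,r} = B_{p+1+ord r 0} * B_{p+1+ord r 1} * ... * B_{p+1+ord r (r-1)}. *)
Definition gen_prod (R : realType) (n : nat) (P : nat -> 'M[R]_n)
  (sigma : nat -> nat) (p : nat) (ord : forall r : nat, {perm 'I_r}) (r : nat)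
  : 'M[R]_n :=
  \prod_(k < r) P (sigma (p + (ord r k).+1)%N).

(* all general products are weakly ergodic. The sequence is indexed by nat
   (P 0 = P_1 etc.); sigma ranges over bijections of the index set. *)
Definition all_gen_prod_weakly_ergodic (R : realType) (n : nat)
  (P : nat -> 'M[R]_n) : Prop :=
  forall (sigma : nat -> nat), bijective sigma ->
  forall (p : nat) (ord : forall r : nat, {perm 'I_r}) (x : 'cV[R]_n),
    inH x -> (fun r => gen_prod P sigma p ord r *m x) @ \oo --> (0 : 'cV[R]_n).

(* Main.v *)
Require Import Defs.
From HB Require Import structures.
From mathcomp Require Import all_boot all_order all_fingroup all_algebra.
From mathcomp Require Import all_classical all_reals all_analysis.
From mathcomp Require Import lra zify.
Import Order.TTheory GRing.Theory Num.Theory.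
Import numFieldNormedType.Exports.
Local Open Scope classical_set_scope.
Local Open Scope ring_scope.

Section Aux.
Variable R : realType.

Lemma mx_entry_le (a b : nat) (x : 'M[R]_(a, b)) i j : `|x i j| <= `|x|.
Proof.
rewrite [leRHS]/Num.Def.normr/= mx_normrE.
exact: (le_bigmax _ (fun ij : 'I_a * 'I_b => `|x ij.1 ij.2|) (i, j)).
Qed.

Lemma mx_norm_leP (a b : nat) (x : 'M[R]_(a, b)) (M : R) : 0 <= M ->
  (forall i j, `|x i j| <= M) -> `|x| <= M.
Proof.
move=> M0 H.
rewrite [leLHS]/Num.Def.normr/= mx_normrE (bigmax_le _ M0)// => -[i j] _; exact: H.
Qed.

Lemma mx_normT (a b : nat) (x : 'M[R]_(a, b)) : `|x^T| = `|x|.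
Proof.
apply/le_anti/andP; split; apply: mx_norm_leP => // i j.
  rewrite mxE; exact: mx_entry_le.
by have := @mx_entry_le _ _ x^T j i; rewrite mxE.
Qed.

Variable n : nat.
Variable nu : 'cV[R]_n -> R.
Hypothesis Hnu : is_vnorm nu.

Lemma nu0 : nu 0 = 0.
Proof. case: Hnu => _ _ hZ _. by rewrite -(scale0r (0 : 'cV[R]_n)) hZ normr0 mul0r. Qed.

Lemma nuN x : nu (- x) = nu x.
Proof. case: Hnu => _ _ hZ _. by rewrite -scaleN1r hZ normrN1 mul1r. Qed.

Lemma nu_sum (I : Type) (s : seq I) (F : I -> 'cV[R]_n) :
  nu (\sum_(i <- s) F i) <= \sum_(i <- s) nu (F i).
Proof.
case: Hnu => _ _ _ hD.
elim: s => [|a s IH]; first by rewrite !big_nil nu0.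
rewrite !big_cons; apply: le_trans (hD _ _) _; exact: lerD.
Qed.

Lemma nu_upper : exists C, 0 <= C /\ forall x, nu x <= C * `|x|.
Proof.
case: Hnu => h0 _ hZ _.
exists (\sum_(i < n) nu (delta_mx i ord0)); split.
  by apply: sumr_ge0 => i _.
move=> x.
rewrite {1}(matrix_sum_delta x).
apply: le_trans (nu_sum _ _ _) _.
rewrite mulr_suml; apply: ler_sum => i _.
rewrite big_ord1 hZ [leRHS]mulrC ler_wpM2r //.
exact: mx_entry_le.
Qed.

Lemma nu_lip : exists C, 0 <= C /\ forall x y, `|nu x - nu y| <= C * `|x - y|.
Proof.
have [C [C0 HC]] := nu_upper.
exists C; split => // x y.
case: Hnu => _ _ _ hD.
have h1 : nu x <= nu y + C * `|x - y|.
  have := hD (x - y) y; rewrite subrK => h.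
  by apply: le_trans h _; rewrite addrC lerD2l; exact: HC.
have h2 : nu y <= nu x + C * `|x - y|.
  have := hD (y - x) x; rewrite subrK => h.
  by apply: le_trans h _; rewrite addrC lerD2l distrC; exact: HC.
rewrite ler_norml; apply/andP; split; lra.
Qed.


Lemma nu_lower : exists m, 0 < m /\ forall x, m * `|x| <= nu x.
Proof.
have [C [C0 HC]] := nu_lip.
case: (Hnu) => h0 hnz hZ hD.
pose g := fun y : 'rV[R]_n => nu y^T.
have gc : continuous g.
  move=> y; apply/(@cvgrPdist_lt _ _ _ (nbhs y) _) => e e0.
  apply/nbhs_ballP; exists (e / (C + 1)) => /=.
    by apply: divr_gt0 => //; lra.
  move=> t; rewrite -ball_normE /= => yt.
  apply: le_lt_trans (HC _ _) _.
  rewrite -linearB /= mx_normT.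
  have C1 : 0 < C + 1 by lra.
  rewrite ltr_pdivlMr // in yt.
  apply: le_lt_trans (_ : C * `|y - t| <= `|y - t| * (C + 1)) yt.
  rewrite mulrC ler_wpM2l //; lra.
pose S := [set y : 'rV[R]_n | `|y| = 1].
have cS : compact S.
  apply: bounded_closed_compact.
    exists 1; split => // M M1 y /= ->; exact: ltW.
  rewrite (_ : S = (@Num.Def.normr _ _) @^-1` [set 1]) //.
  apply: preimage_closed.
    move=> y _; exact: norm_continuous.
  exact: (accessible_closed_set1 (hausdorff_accessible (@Rhausdorff R))).
pose K := g @` S.
have cK : compact K by apply: continuous_compact => //; exact: continuous_subspaceT.
have clK : closed K by apply: compact_closed => //; exact: Rhausdorff.
have nK0 : ~ K 0.
  move=> [y Sy gy0]; have := hnz _ gy0 => /(congr1 trmx); rewrite trmxK trmx0 => y0.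
  by move: Sy; rewrite /S /= y0 normr0 => /eqP; rewrite eq_sym oner_eq0.
have oK : open (~` K) by rewrite openC.
have := oK 0 nK0 => /nbhs_ballP [eps /= eps0 Heps].
exists eps; split => // x.
have [->|x0] := eqVneq x 0; first by rewrite normr0 mulr0 h0.
have nx : 0 < `|x| by rewrite normr_gt0.
pose y := (`|x|^-1 *: x)^T.
have Sy : S y by rewrite /S /= mx_normT normrZ normfV normr_id mulVf // gt_eqF.
have Kgy : K (g y) by exists y.
have : ~ ball (0:R) eps (g y) by move=> /Heps.
rewrite -ball_normE /= sub0r normrN ger0_norm ?h0 // => /negP; rewrite -leNgt.
rewrite /g /y trmxK hZ normfV normr_id ler_pdivlMl // mulrC.
by rewrite mulrC.
Qed.


Lemma H_stable (P : 'M[R]_n) x : col_stochastic P -> inH x -> inH (P *m x).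
Proof.
move=> [_ Hs] Hx; rewrite /inH.
under eq_bigr do rewrite mxE.
rewrite exchange_big /=.
under eq_bigr do rewrite -mulr_suml Hs mul1r.
exact: Hx.
Qed.

Lemma mulmx_norm_le (P : 'M[R]_n) (x : 'cV[R]_n) :
  `|P *m x| <= (\sum_i \sum_j `|P i j|) * `|x|.
Proof.
apply: mx_norm_leP.
  by apply: mulr_ge0 => //; apply: sumr_ge0 => i _; exact: sumr_ge0.
move=> i j; rewrite mxE.
apply: le_trans (ler_norm_sum _ _ _) _.
apply: (@le_trans _ _ ((\sum_k `|P i k|) * `|x|)).
  rewrite mulr_suml; apply: ler_sum => k _.
  by rewrite normrM ler_wpM2l // (@mx_entry_le _ _ x k j).
rewrite ler_wpM2r //.
rewrite [leRHS](bigD1 i) //= lerDl; apply: sumr_ge0 => k _; exact: sumr_ge0.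
Qed.

Lemma coeff_bound (P : 'M[R]_n) x : inH x ->
  nu (P *m x) <= coeff_erg nu P * nu x.
Proof.
case: (Hnu) => h0 hnz hZ hD.
move=> Hx.
have [->|x0] := eqVneq x 0; first by rewrite mulmx0 nu0 mulr0.
have nx : 0 < nu x.
  rewrite lt_neqAle h0 andbT eq_sym; apply/eqP => /hnz; exact/eqP.
have [Cu [Cu0 HCu]] := nu_upper.
have [m [m0 Hm]] := nu_lower.
pose KP := \sum_i \sum_j `|P i j|.
have KP0 : 0 <= KP by apply: sumr_ge0 => i _; exact: sumr_ge0.
have key : forall z, z <> 0 -> nu (P *m z) <= (Cu * KP / m) * nu z.
  move=> z _.
  apply: le_trans (HCu _) _.
  apply: (@le_trans _ _ (Cu * (KP * `|z|))).
    exact: (ler_wpM2l Cu0 (mulmx_norm_le P z)).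
  rewrite -!mulrA; apply: (ler_wpM2l Cu0); apply: (ler_wpM2l KP0).
  by rewrite mulrC ler_pdivlMr // mulrC.
have ub : has_ubound [set nu (P *m x) / nu x | x in [set x | inH x /\ x <> 0]].
  exists (Cu * KP / m) => _ [z [Hz z0] <-].
  have nz : 0 < nu z.
    rewrite lt_neqAle h0 andbT eq_sym; apply/eqP => /hnz; exact.
  by rewrite ler_pdivrMr // key.
have := ub_le_sup ub (_ : [set nu (P *m x) / nu x | x in [set x | inH x /\ x <> 0]] (nu (P *m x) / nu x)).
rewrite -/(coeff_erg nu P) ler_pdivrMr //; apply.
by exists x => //; split => //; exact/eqP.
Qed.


Lemma prod_H (I : Type) (s : seq I) (F : I -> 'M[R]_n) x :
  (forall i, col_stochastic (F i)) -> inH x -> inH ((\prod_(i <- s) F i) *m x).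
Proof.
move=> HF Hx; elim: s => [|a s IH]; first by rewrite big_nil -idmxE mul1mx.
rewrite big_cons.
rewrite (_ : (F a * \prod_(j <- s) F j) *m x = F a *m ((\prod_(j <- s) F j) *m x)); last by rewrite mulmxA.
exact: H_stable.
Qed.

Lemma prod_bound (I : Type) (s : seq I) (F : I -> 'M[R]_n) (q : R) x :
  0 <= q ->
  (forall i, col_stochastic (F i)) -> (forall i, coeff_erg nu (F i) <= 1) ->
  inH x ->
  nu ((\prod_(i <- s) F i) *m x) <=
    q ^+ (\sum_(i <- s) nat_of_bool (coeff_erg nu (F i) < q)%R)%N * nu x.
Proof.
case: (Hnu) => h0 hnz hZ hD.
move=> q0 HF H1 Hx; elim: s => [|a s IH].
  by rewrite !big_nil -idmxE mul1mx expr0 mul1r.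
rewrite !big_cons.
rewrite (_ : (F a * \prod_(j <- s) F j) *m x = F a *m ((\prod_(j <- s) F j) *m x)); last by rewrite mulmxA.

have hh := coeff_bound (F a) _ (@prod_H _ s F x HF Hx).
apply: le_trans hh _.
case: ltP => ha /=.
  rewrite add1n exprS -mulrA.

  apply: (le_trans (ler_wpM2r (h0 _) (ltW ha))).
  exact: (ler_wpM2l q0 IH).
rewrite add0n.
apply: le_trans _ IH.
by rewrite -[leRHS]mul1r; apply: (ler_wpM2r (h0 _)).
Qed.

End Aux.

Theorem corollary4p4 (R : realType) (n : nat) (nu : 'cV[R]_n -> R)
  (P : nat -> 'M[R]_n) (c : R) :
  is_vnorm nu ->
  (forall i, col_stochastic (P i)) ->
  (forall i, coeff_erg nu (P i) <= 1) ->
  accumulation_point (fun i => coeff_erg nu (P i)) c ->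
  c < 1 ->
  all_gen_prod_weakly_ergodic P.
Proof.
move=> Hnu Hst Hle Hacc Hc sigma [sinv s1 s2] p ord x Hx.
pose q := Num.max ((1 + c) / 2) 0.
have q0 : 0 <= q by rewrite le_max lexx orbT.
have q1 : q < 1 by rewrite gt_max; apply/andP; split; lra.
pose good i := (coeff_erg nu (P i) < q)%R.
have inf : forall N, exists2 i, (N <= i)%N & good i.
  move=> N; have [|i Ni Hi] := Hacc ((1 - c) / 2) _ N; first lra.
  exists i => //; rewrite /good.
  move: Hi; rewrite ltr_norml => /andP [_ h].
  apply: (@lt_le_trans _ _ ((1 + c) / 2)); first lra.
  by rewrite le_max lexx.
have infB : forall M, exists2 j, (M <= j)%N & good (sigma j).
  move=> M; have [i Ni Hi] := inf (\max_(j < M) sigma j).+1.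
  exists (sinv i); last by rewrite s2.
  rewrite leqNgt; apply/negP => jM.
  have := @leq_bigmax _ (fun j : 'I_M => sigma j) (Ordinal jM); rewrite /= s2 => h.
  by move: Ni; rewrite ltnNge h.
pose g k := nat_of_bool (good (sigma (p + k.+1)%N)).
pose Cnt r := (\sum_(0 <= k < r) g k)%N.
have mono : forall r r', (r <= r')%N -> (Cnt r <= Cnt r')%N.
  move=> r r' h; rewrite /Cnt (big_cat_nat (leq0n r) h) /=; exact: leq_addr.
have unb : forall K, exists r, (K <= Cnt r)%N.
  elim=> [|K [r Hr]]; first by exists 0%N.
  have [j Hj Gj] := infB (p + r.+1)%N.
  exists (j - p)%N.
  have hk : (p + (j - p).-1.+1 = j)%N by lia.
  rewrite (_ : (j - p = (j - p).-1.+1)%N); last by lia.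
  rewrite /Cnt big_nat_recr //= {2}/g hk Gj addn1 ltnS.
  apply: leq_trans Hr _; apply: mono; lia.
have bound : forall r, nu (gen_prod P sigma p ord r *m x) <= q ^+ Cnt r * nu x.
  move=> r.
  have := @prod_bound R n nu Hnu _ (index_enum 'I_r)
    (fun k => P (sigma (p + (ord r k).+1)%N)) q x q0 (fun _ => Hst _) (fun _ => Hle _) Hx.
  suff -> : (\sum_(i <- index_enum 'I_r)
     nat_of_bool (coeff_erg nu (P (sigma (p + (ord r i).+1)%N)) < q)%R)%N = Cnt r by [].
  rewrite /Cnt big_mkord.
  rewrite [RHS](reindex_inj (@perm_inj _ (ord r))) //.
have [m [m0 Hm]] := @nu_lower R n nu Hnu.
apply/cvgr0Pnorm_lt => e e0.
have nx0 : 0 <= nu x by case: Hnu.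
pose d := e * m / (nu x + 1).
have d0 : 0 < d by rewrite /d divr_gt0 ?mulr_gt0 //; lra.
have hq : `|q| < 1 by rewrite ger0_norm.
have := (cvgr0Pnorm_lt _).1 (cvg_expr hq) d d0.
case=> K0 _ HK.
have hK : q ^+ K0 < d.
  by have := HK K0 (leqnn _); rewrite /= ger0_norm // exprn_ge0.
have [r0 Hr0] := unb K0.
exists r0 => // r /= hr.
have h1 : m * `|gen_prod P sigma p ord r *m x| <= q ^+ K0 * nu x.
  apply: le_trans (Hm _) _; apply: le_trans (bound r) _.
  apply: ler_wpM2r => //; apply: ler_wiXn2l => //; first exact: ltW.
  exact: leq_trans Hr0 (mono _ _ hr).
have h2 : q ^+ K0 * nu x <= d * nu x by apply: ler_wpM2r => //; exact: ltW.
have h3 : d * (nu x + 1) = e * m by rewrite /d divfK // gt_eqF //; lra.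
have h4 : m * `|gen_prod P sigma p ord r *m x| < e * m by nra.
by rewrite -(ltr_pM2l m0) [X in _ < X]mulrC.
Qed.
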